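(* (i) For every point $\langle y\rangle\in\mathcal Y$, the point $\langle F(y)\rangle$ of $\mathrm{PG}(W)$ belongs to $\mathcal E\setminus\mathcal C$. (ii) The map $\mathcal Y\to\mathcal E\setminus\mathcal C$, $\langle y\rangle\mapsto\langle F(y)\rangle$ (the projection of $\mathcal Y$ from the line $\mathrm{PG}(V)$), is a bijection.
   Context: $q$ is a prime power. Regard $\mathbb F_{q^6}$ as a $6$-dimensional $\mathbb F_q$-vector space and let $\Pi=\mathrm{PG}(\mathbb F_{q^6})\cong\mathrm{PG}(5,q)$, whose points are $\langle x\rangle=\mathbb F_q^*x$, $x\ne0$. Let $\mathcal Y=\{\langle b-1\rangle : b\in\mathbb F_{q^6},\ b^{q^2-q+1}=1,\ b\ne 1\}$. Let $F(X)=X^{q^2}-X^q+X$, an $\mathbb F_q$-linear map of $\mathbb F_{q^6}$; let $V=\ker F$ (a $2$-dimensional $\mathbb F_q$-subspace) and $W=F(\mathbb F_{q^6})=\{z : z+z^q=z^{q^3}+z^{q^4}\}$, a $4$-dimensional $\mathbb F_q$-subspace; $\mathrm{PG}(W)\cong\mathrm{PG}(3,q)$ is identified with the quotient of $\Pi$ by $\mathrm{PG}(V)$ via $\langle x\rangle\mapsto\langle F(x)\rangle$ for $x\notin V$. Let $\Phi(z)=z^{q^2}z+z^{q^2}z^{q}+z^{q}z^{q^3}$; for $z\in W$ one has $\Phi(z)\in\mathbb F_q$, and $\mathcal E=\{\langle z\rangle\in\mathrm{PG}(W):\Phi(z)=0\}$ is a quadric of $\mathrm{PG}(W)$. Note $\mathbb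 F_{q^3}\subseteq W$; let $\mathcal C=\{\langle z\rangle\in\mathcal E: z\in\mathbb F_{q^3}\}$, the section of $\mathcal E$ by the plane $\mathrm{PG}(\mathbb F_{q^3})$ (a non-degenerate conic). *)

(* Defs.v *)
From HB Require Import structures.
From mathcomp Require Import all_boot all_order all_algebra all_field.
Set Implicit Arguments. Unset Strict Implicit. Unset Printing Implicit Defensive.
Import GRing.Theory.
Local Open Scope ring_scope.

(* L plays the role of F_{q^6}; F_q = {c : c^q = c}. *)
Section Defs.
Variables (L : finFieldType) (q : nat).

Definition inFqstar (c : L) : bool := (c ^+ q == c) && (c != 0).

(* projective point <x> = F_q^* x, as a subset of L *)
Definition pt (x : L) : {set L} := [set c * x | c in [pred c | inFqstar c]].

Definition Fmap (x : L) : L := x ^+ (q ^ 2) - x ^+ q + x.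

Definition Wsp : {set L} := [set Fmap x | x : L].

Definition Phi (z : L) : L :=
  z ^+ (q ^ 2) * z + z ^+ (q ^ 2) * z ^+ q + z ^+ q * z ^+ (q ^ 3).

Definition Yset : {set {set L}} :=
  [set pt (b - 1) | b in [pred b : L | (b ^+ (q ^ 2 - q + 1) == 1) && (b != 1)]].

Definition Eset : {set {set L}} :=
  [set pt z | z in [pred z : L | [&& z \in Wsp, z != 0 & Phi z == 0]]].

Definition Cset : {set {set L}} :=
  [set P in Eset | [exists z : L, [&& z ^+ (q ^ 3) == z, z != 0 & P == pt z]]].

Definition projV (P : {set L}) : {set L} :=
  if [pick y in P] is Some y then pt (Fmap y) else set0.

End Defs.

(* Main.v *)
Require Import Defs.
From HB Require Import structures.
From mathcomp Require Import all_boot all_order all_algebra all_field.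
From mathcomp Require Import ring zify.
Import GRing.Theory.
Local Open Scope ring_scope.

Section S.
Variables (L : finFieldType) (q : nat).
Hypothesis hq1 : (1 < q)%N.
Hypothesis hadd : forall x y : L, (x + y) ^+ q = x ^+ q + y ^+ q.
Hypothesis hcard : forall x : L, x ^+ (q ^ 6) = x.

Definition T (i : nat) (x : L) := x ^+ (q ^ i).

Lemma TS i x : T i.+1 x = (T i x) ^+ q.
Proof. by rewrite /T expnSr exprM. Qed.

Lemma TD i x y : T i (x + y) = T i x + T i y.
Proof. by elim: i => [|i IH]; rewrite ?TS ?IH ?hadd // /T expn0 !expr1. Qed.

Lemma TB i x y : T i (x - y) = T i x - T i y.
Proof. by have := TD i (x - y) y; rewrite subrK => ->; rewrite addrK. Qed.

Lemma TM i x y : T i (x * y) = T i x * T i y.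
Proof. by rewrite /T exprMn. Qed.

Lemma TV i x : T i (x^-1) = (T i x)^-1.
Proof. by rewrite /T exprVn. Qed.

Lemma T1n i : T i 1 = 1.
Proof. by rewrite /T expr1n. Qed.

Lemma T0 x : T 0 x = x.
Proof. by rewrite /T expn0 expr1. Qed.

Lemma TT i j x : T j (T i x) = T (i + j) x.
Proof. by rewrite /T -exprM expnD. Qed.

Lemma T6 x : T 6 x = x.
Proof. exact: hcard. Qed.

Lemma Tred i x : T (6 + i) x = T i x.
Proof. by rewrite -TT T6. Qed.
Lemma T7 x : T 7 x = T 1 x. Proof. exact: Tred 1 x. Qed.
Lemma T8 x : T 8 x = T 2 x. Proof. exact: Tred 2 x. Qed.
Lemma T9 x : T 9 x = T 3 x. Proof. exact: Tred 3 x. Qed.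

Lemma Tfix i c : c ^+ q = c -> T i c = c.
Proof. by move=> h; elim: i => [|i IH]; rewrite ?T0 // TS IH. Qed.

Lemma Teq0 i x : (T i x == 0) = (x == 0).
Proof. by rewrite /T expf_eq0 expn_gt0 (ltnW hq1). Qed.

Lemma Tinj1 x y : T 1 x = T 1 y -> x = y.
Proof. by move=> h; rewrite -(T6 x) -(T6 y) -[6%N]/(1 + 5)%N -!TT h. Qed.

Lemma Tq x : x ^+ q = T 1 x.
Proof. by rewrite /T expn1. Qed.

Lemma FmapT (x : L) : Fmap q x = T 2 x - T 1 x + T 0 x.
Proof. by rewrite /Fmap /T expn0 expn1 expr1. Qed.

Lemma TFmap i (x : L) : T i (Fmap q x) = T i.+2 x - T i.+1 x + T i x.
Proof. by rewrite FmapT TD TB !TT add0n. Qed.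

Lemma PhiT (z : L) : Phi q z = T 2 z * T 0 z + T 2 z * T 1 z + T 1 z * T 3 z.
Proof. by rewrite /Phi /T expn0 expn1 expr1. Qed.

Lemma inFq1 : inFqstar q (1 : L).
Proof. by unfold inFqstar; rewrite expr1n eqxx oner_neq0. Qed.

Lemma inFqM (c d : L) : inFqstar q c -> inFqstar q d -> inFqstar q (c * d).
Proof.
by move=> /andP[/eqP hc nc] /andP[/eqP hd nd]; unfold inFqstar; rewrite exprMn hc hd eqxx mulf_neq0.
Qed.

Lemma inFqV (c : L) : inFqstar q c -> inFqstar q (c^-1).
Proof. by move=> /andP[/eqP hc nc]; unfold inFqstar; rewrite exprVn hc eqxx invr_eq0. Qed.

Lemma ptP (x y : L) : reflect (exists2 c, inFqstar q c & y = c * x) (y \in pt q x).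
Proof.
apply: (iffP imsetP) => [[c hc ->]|[c hc ->]]; exists c => //.
Qed.

Lemma pt_mem (x : L) : x \in pt q x.
Proof. by apply/ptP; exists 1; rewrite ?mul1r // inFq1. Qed.

Lemma pt_scale (c x : L) : inFqstar q c -> pt q (c * x) = pt q x.
Proof.
move=> hc; apply/setP => y; apply/ptP/ptP => [[d hd ->]|[d hd ->]].
  by exists (d * c); rewrite ?mulrA // inFqM.
exists (d * c^-1); first by rewrite inFqM // inFqV.
by rewrite -mulrA (mulrA c^-1) mulVf ?mul1r //; case/andP: hc.
Qed.

Lemma pt_eq (u v : L) : pt q u = pt q v -> exists2 l, inFqstar q l & v = l * u.
Proof. by move=> h; apply/ptP; rewrite h pt_mem. Qed.

Lemma Fmap_scale (c x : L) : c ^+ q = c -> Fmap q (c * x) = c * Fmap q x.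
Proof. by move=> hc; rewrite !FmapT !TM !T0 (@Tfix 2 c hc) (@Tfix 1 c hc); ring. Qed.

Lemma projV_pt (x : L) : projV q (pt q x) = pt q (Fmap q x).
Proof.
rewrite /projV; case: pickP => [y /ptP [c hc ->]|h].
  by rewrite Fmap_scale ?pt_scale //; case/andP: hc => /eqP.
by move: (h x); rewrite pt_mem.
Qed.

Lemma notC (z : L) : z != 0 -> T 3 z != z -> pt q z \notin Cset L q.
Proof.
move=> nz n3; rewrite inE negb_and; apply/orP; right.
apply/negP => /existsP [w /and3P [/eqP hw nw /eqP e]].
case: (pt_eq _ _ e) => l /andP [/eqP hl nl] ew.
move: hw; rewrite ew -/(T 3 _) TM Tfix // => /(mulfI nl) h.
by rewrite h eqxx in n3.
Qed.

Lemma normE (b : L) : b != 0 -> (b ^+ (q ^ 2 - q + 1) == 1) = (T 2 b * b == T 1 b).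
Proof.
move=> nb; have e : (q ^ 2 - q + 1 + q = q ^ 2 + 1)%N.
  have : (q <= q ^ 2)%N by rewrite expnS expn1 leq_pmulr // ltnW.
  lia.
have nq : b ^+ q != 0 by rewrite expf_neq0.
rewrite -(inj_eq (mulIf nq)) mul1r -exprD e exprD expr1 /T expn1.
done.
Qed.

Lemma algA (z0 z1 z2 z3 z4 z5 : L) : z4 = z0 + z1 - z3 -> z5 = z2 - z0 + z3 ->
  z2 * z0 + z2 * z1 + z1 * z3 = 0 -> z1 * z3 * z5 = z0 * z2 * z4.
Proof.
move=> -> -> h; apply/eqP; rewrite -subr_eq0.
have -> : z1 * z3 * (z2 - z0 + z3) - z0 * z2 * (z0 + z1 - z3) =
  (z3 - z0) * (z2 * z0 + z2 * z1 + z1 * z3) by ring.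
by rewrite h mulr0.
Qed.

Lemma algB (z0 z1 z2 z3 z4 z5 : L) : z4 = z0 + z1 - z3 -> z5 = z2 - z0 + z3 ->
  z2 * z0 + z2 * z1 + z1 * z3 = 0 -> z2 != 0 -> z3 != 0 -> z4 != 0 -> z5 != 0 ->
  (z2 / z5 - z1 / z4 + z0 / z3 - 1) * z0 = (z1 / z4 - z0 / z3 + z5 / z2 - 1) * z1.
Proof.
move=> h4 h5 h n2 n3 n4 n5; apply/eqP; rewrite -subr_eq0.
have -> : (z2 / z5 - z1 / z4 + z0 / z3 - 1) * z0 - (z1 / z4 - z0 / z3 + z5 / z2 - 1) * z1
  = ((z2*z2*z3*z4 - z1*z2*z3*z5 + z0*z2*z4*z5 - z2*z3*z4*z5) * z0
    - (z1*z2*z3*z5 - z0*z2*z4*z5 + z5*z5*z3*z4 - z2*z3*z4*z5) * z1) / (z2*z3*z4*z5).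
  by field; rewrite n2 n3 n4 n5.
rewrite h4 h5.
have -> : forall D, ((z2*z2*z3*(z0 + z1 - z3) - z1*z2*z3*(z2 - z0 + z3)
    + z0*z2*(z0 + z1 - z3)*(z2 - z0 + z3) - z2*z3*(z0 + z1 - z3)*(z2 - z0 + z3)) * z0
    - (z1*z2*z3*(z2 - z0 + z3) - z0*z2*(z0 + z1 - z3)*(z2 - z0 + z3)
    + (z2 - z0 + z3)*(z2 - z0 + z3)*z3*(z0 + z1 - z3) - z2*z3*(z0 + z1 - z3)*(z2 - z0 + z3)) * z1) / D
  = ((z3^+3 - z1*z3^+2 - z1*z2*z3 - 3%:R*z0*z3^+2 - z0*z2*z3 + 2%:R*z0*z1*z3 + z0*z1*z2
      + 3%:R*z0^+2*z3 + z0^+2*z2 - z0^+2*z1 - z0^+3) * (z2 * z0 + z2 * z1 + z1 * z3)) / D.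
  by move=> D; congr (_ / _); ring.
by rewrite h mulr0 mul0r.
Qed.


Lemma cross (X Y u v : L) : u != 0 -> v != 0 -> X * v = Y * u -> X / u = Y / v.
Proof.
move=> nu nv h; apply: (mulIf nu); apply: (mulIf nv).
by rewrite divfK // -mulrA (mulrC u) mulrA divfK.
Qed.

Lemma Ybase (b : L) : b ^+ (q ^ 2 - q + 1) = 1 -> b != 1 ->
  [/\ Fmap q (b - 1) != 0, Phi q (Fmap q (b - 1)) = 0,
      T 3 (Fmap q (b - 1)) * T 1 b = Fmap q (b - 1) & T 1 b != 1].
Proof.
move=> hb hb1.
have nb : b != 0.
  by apply/eqP => b0; move: hb; rewrite b0 addn1 exprS mul0r => /eqP; rewrite eq_sym oner_eq0.
have hrel : T 2 b * b = T 1 b by apply/eqP; rewrite -normE // hb.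
have nc : T 1 b != 0 by rewrite Teq0.
have hrelT i : T i.+2 b * T i b = T i.+1 b.
  by have := congr1 (T i) hrel; rewrite TM !TT.
have eT i : T i.+2 b = T i.+1 b / T i b by rewrite -(hrelT i) mulfK // Teq0.
have nbc : b != T 1 b.
  apply/eqP => ebc; have e22 : T 2 b = b by rewrite -[2%N]/(1 + 1)%N -TT -ebc.
  move: hrel; rewrite e22 -ebc -{3}(mul1r b) => h; have := mulIf nb h => /eqP.
  by rewrite (negbTE hb1).
have nz : Fmap q (b - 1) != 0.
  rewrite FmapT !TB !T1n (eT 0) !T0.
  have -> : T 1 b / b - 1 - (T 1 b - 1) + (b - 1) = (b - 1) * (b - T 1 b) / b.
    by field.
  by rewrite !mulf_neq0 ?invr_eq0 // subr_eq0.
split => //.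
- rewrite PhiT !TFmap !TB !T1n !T0 !(eT 3) !(eT 2) !(eT 1) !(eT 0) !T0.
  by field; rewrite ?Teq0 ?nb ?oner_neq0.
- rewrite !TFmap FmapT !TB !T1n !T0 !(eT 3) !(eT 2) !(eT 1) !(eT 0) !T0.
  by field; rewrite ?Teq0 ?nb ?oner_neq0.
- by apply: contra hb1 => /eqP e; rewrite -(T1n 1) in e; rewrite (Tinj1 _ _ e).
Qed.

Lemma Esurj (z : L) : z \in Wsp L q -> z != 0 -> Phi q z = 0 -> T 3 z != z ->
  exists b, [/\ b ^+ (q ^ 2 - q + 1) = 1, b != 1 & pt q (Fmap q (b - 1)) = pt q z].
Proof.
move=> hW nz hP n3.
have [x _ ez] := imsetP hW.
have w4 : T 4 z = T 0 z + T 1 z - T 3 z by rewrite ez !TFmap ?T6 ?T7 ?T0; ring.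
have w5 : T 5 z = T 2 z - T 0 z + T 3 z by rewrite ez !TFmap ?T6 ?T7 ?T0; ring.
have nzi i : T i z != 0 by rewrite Teq0.
have hPhi : T 2 z * T 0 z + T 2 z * T 1 z + T 1 z * T 3 z = 0 by rewrite -PhiT.
have A := algA _ _ _ _ _ _ w4 w5 hPhi.
have B := algB _ _ _ _ _ _ w4 w5 hPhi (nzi 2%N) (nzi 3%N) (nzi 4%N) (nzi 5%N).
rewrite !T0 in A B.
set c := z / T 3 z.
have Tc i : T i c = T i z / T i.+3 z by rewrite /c TM TV TT add3n.
have nc : c != 0 by rewrite mulf_neq0 ?invr_eq0.
set b := T 5 c.
have nb : b != 0 by rewrite Teq0.
have Tb1 : T 1 b = c by rewrite /b TT T6.
have Tb2 : T 2 b = T 1 c by rewrite /b TT T7.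
have Tb3 : T 3 b = T 2 c by rewrite /b TT T8.
have hb : b ^+ (q ^ 2 - q + 1) = 1.
  apply/eqP; rewrite normE // Tb2 Tb1 /b !Tc T8 /c; apply/eqP.
  have -> : T 1 z / T 4 z * (T 5 z / T 2 z) = (T 1 z * T 3 z * T 5 z) / (T 2 z * T 3 z * T 4 z).
    by field; rewrite ?nzi.
  by rewrite A; field; rewrite ?nzi ?nz.
have hb1 : b != 1.
  apply/eqP => e; have hc1 : c = 1 by rewrite -Tb1 e T1n.
  have h : z = T 3 z by rewrite -{1}(divfK (nzi 3%N) z) -/c hc1 mul1r.
  by rewrite -h eqxx in n3.
exists b; split => //.
case: (Ybase _ hb hb1) => nF _ _ _.
set l := Fmap q (b - 1) / z.
have el : Fmap q (b - 1) = l * z by rewrite /l divfK.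
rewrite el pt_scale //; unfold inFqstar.
rewrite mulf_neq0 ?invr_eq0 // andbT Tq /l TM TV !TFmap FmapT !TB !T1n !T0 Tb1 Tb2 Tb3 /b !Tc.
rewrite /c T8; apply/eqP; apply: cross => //.
move: B.
have -> : T 2 z / T 5 z - 1 - (T 1 z / T 4 z - 1) + (z / T 3 z - 1) =
   T 2 z / T 5 z - T 1 z / T 4 z + z / T 3 z - 1 by ring.
have -> : T 1 z / T 4 z - 1 - (z / T 3 z - 1) + (T 5 z / T 2 z - 1) =
   T 1 z / T 4 z - z / T 3 z + T 5 z / T 2 z - 1 by ring.
done.
Qed.


Lemma Ymem (P : {set L}) : P \in Yset L q ->
  exists2 b, (b ^+ (q ^ 2 - q + 1) = 1) /\ b != 1 & P = pt q (b - 1).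
Proof. by case/imsetP => b; rewrite inE => /andP [/eqP h1 h2] ->; exists b. Qed.

Lemma Yimg (b : L) : b ^+ (q ^ 2 - q + 1) = 1 -> b != 1 ->
  pt q (Fmap q (b - 1)) \in Eset L q :\: Cset L q.
Proof.
move=> h1 h2; case: (Ybase _ h1 h2) => nz hP e3 nc.
rewrite inE notC //=.
  apply/imsetP; exists (Fmap q (b - 1)) => //.
  rewrite inE /= nz hP eqxx !andbT /Wsp.
  by apply/imsetP; exists (b - 1).
apply/eqP => h; move: e3; rewrite h -{2}(mulr1 (Fmap q (b - 1))) => e.
by have := mulfI nz e => /eqP; rewrite (negbTE nc).
Qed.

Lemma main_sec :
  (forall P, P \in Yset L q -> forall y, y \in P ->
      pt q (Fmap q y) \in Eset L q :\: Cset L q)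
  /\ ({in Yset L q &, injective (projV q)}
      /\ projV q @: Yset L q = Eset L q :\: Cset L q).
Proof.
split.
  move=> P /Ymem [b [h1 h2] ->] y /ptP [c hc ->].
  rewrite Fmap_scale ?pt_scale //; first exact: Yimg.
  by case/andP: hc => /eqP.
split.
  move=> P P' /Ymem [b [h1 h2] ->] /Ymem [b' [h1' h2'] ->]; rewrite !projV_pt => e.
  case: (Ybase _ h1 h2) => nz _ e3 _; case: (Ybase _ h1' h2') => nz' _ e3' _.
  case: (pt_eq _ _ e) => l /andP [/eqP hl nl] el.
  have h3z : T 3 (Fmap q (b' - 1)) = l * T 3 (Fmap q (b - 1)) by rewrite el TM (Tfix 3 _ hl).
  have hh : T 3 (Fmap q (b' - 1)) * T 1 b' = T 3 (Fmap q (b' - 1)) * T 1 b.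
    by rewrite e3' h3z -mulrA e3 el.
  have n3 : T 3 (Fmap q (b' - 1)) != 0 by rewrite Teq0.
  by rewrite (Tinj1 _ _ (mulfI n3 hh)).
apply/setP => Q; apply/imsetP/idP.
  by case => P /Ymem [b [h1 h2] ->] ->; rewrite projV_pt; exact: Yimg.
move=> hQ; have := hQ; rewrite inE => /andP [nC hE].
case/imsetP: (hE) => z; rewrite inE => /and3P [hW nz /eqP hP] eQ.
have n3 : T 3 z != z.
  apply: contra nC => /eqP e3; rewrite inE hE /=; apply/existsP; exists z.
  by rewrite -/(T 3 z) e3 eqxx nz eQ eqxx.
case: (Esurj _ hW nz hP n3) => b [h1 h2 e].
exists (pt q (b - 1)); last by rewrite projV_pt e eQ.
by apply/imsetP; exists b; rewrite // inE h1 eqxx h2.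
Qed.

End S.

Theorem mainTheorem15 (L : finFieldType) (q : nat)
  (hq : exists p k : nat, [/\ prime p, (0 < k)%N & q = (p ^ k)%N])
  (hL : #|L| = (q ^ 6)%N) :
  (forall P, P \in Yset L q -> forall y, y \in P ->
      pt q (Fmap q y) \in Eset L q :\: Cset L q)
  /\ ({in Yset L q &, injective (projV q)}
      /\ projV q @: Yset L q = Eset L q :\: Cset L q).
Proof.
case: hq => p [k [pp k0 eq]].
have hq1 : (1 < q)%N.
  rewrite eq; case: k k0 {eq} => // k _; rewrite expnS.
  by apply: leq_trans (prime_gt1 pp) _; rewrite leq_pmulr // expn_gt0 prime_gt0.
have hpch : p \in [pchar L].
  by apply: (@card_finPcharP _ p (k * 6)) => //; rewrite hL eq expnM.
have hadd : forall x y : L, (x + y) ^+ q = x ^+ q + y ^+ q.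
  move=> x y; apply: exprDn_pchar.
  by rewrite (eq_pnat _ (pcharf_eq hpch)) eq pnatX pnat_id.
have hcard : forall x : L, x ^+ (q ^ 6) = x by move=> x; rewrite -hL expf_card.
exact: main_sec.
Qed.
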